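(* In the setting of Problem A with $m>0$ and $0<\underline\theta<\overline\theta$, let $z\in\mathcal H_0$ and $w\in\mathcal H$ with $w\notin(A+B+C+D)(Gz)$. Then the bracketing/bisection procedure (see context), started from any $\rho^0>0$, terminates after finitely many steps and returns $(\rho,x,y)$ with $\rho>0$ and $x\in\mathcal H$ satisfying (5.3)–(5.4), and $y=(Gz-x)/\rho+w+[B(x)-B(Gz)]+[D(x)-D_{(Gz)}(x)]$.
   Context: Problem A setting: $\mathcal H_0,\mathcal H$ real Hilbert spaces; $A:\mathcal H\rightrightarrows\mathcal H$ maximal monotone; $B:\mathcal H\to\mathcal H$ monotone and $\ell$-Lipschitz ($\ell\ge0$); $C:\mathcal H\to\mathcal H$ $\beta$-cocoercive with $\beta\in(0,\infty]$, i.e. $\langle x-y,Cx-Cy\rangle\ge\beta\|Cx-Cy\|^2$ (with $1/\infty=0$); $D:\mathcal H\to\mathcal H$ monotone and continuously differentiable with $m$-Lipschitz derivative $D'$; $G:\mathcal H_0\to\mathcal H$ bounded linear. For $u\in\mathcal H$, $D_{(u)}(x):=D(u)+D'(u)(x-u)$. For a maximal monotone $S$, $J_S:=(S+I)^{-1}$. Given $\hat\delta>0$ and $0<\underline\theta<\overline\theta$, Problem A asks, for given $z\in\mathcal H_0$, $w\in\mathcal H$, for $\rho>0$ and $x\in\mathcal H$ with (5.3) $x=J_{\rho(A+D_{(Gz)})}\big(Gz+\rho w-\rho(B+C)(Gz)\big)$ and (5.4) $\underline\theta\le4\ell^2\rho^2+(\beta^{-1}+\hat\delta)\rho+(m\rho\|x-Gz\|)^2\le\overline\theta$.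 Bracketing/bisection procedure: for $\rho>0$ let $x(\rho):=J_{\rho(A+D_{(Gz)})}\big(Gz+\rho w-\rho(B+C)(Gz)\big)$ and $q(\rho):=4\ell^2\rho^2+(\beta^{-1}+\hat\delta)\rho+(m\rho\|x(\rho)-Gz\|)^2$. Given $\rho^0>0$: if $\underline\theta\le q(\rho^0)\le\overline\theta$, return $\rho=\rho^0$. If $q(\rho^0)<\underline\theta$, set $t_-=\rho^0$, $t_+=\rho^0\overline\theta/q(\rho^0)$; if $q(\rho^0)>\overline\theta$, set $t_-=\rho^0\underline\theta/q(\rho^0)$, $t_+=\rho^0$. Then repeat: set $\tilde\rho=\sqrt{t_-t_+}$; if $\underline\theta\le q(\tilde\rho)\le\overline\theta$, return $\rho=\tilde\rho$; if $q(\tilde\rho)>\overline\theta$ set $t_+=\tilde\rho$; if $q(\tilde\rho)<\underline\theta$ set $t_-=\tilde\rho$. On return with $\rho$, output $x=x(\rho)$ and $y=(Gz-x)/\rho+w+[B(x)-B(Gz)]+[D(x)-D_{(Gz)}(x)]$. *)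

(* Defs.v *)
From HB Require Import structures.
From mathcomp Require Import all_boot all_order all_algebra.
From mathcomp Require Import all_classical all_reals all_analysis.
Set Implicit Arguments. Unset Strict Implicit. Unset Printing Implicit Defensive.
Import Order.TTheory GRing.Theory Num.Theory.
Import numFieldNormedType.Exports.
Local Open Scope classical_set_scope.
Local Open Scope ring_scope.

Section Defs.
Variable R : realType.

(** [ip] is a (real) inner product on the normed space [V] inducing its norm.
    Together with completeness of [V] this makes [V] a real Hilbert space. *)
Definition is_inner_product (V : normedModType R) (ip : V -> V -> R) : Prop :=
  [/\ forall x y, ip x y = ip y x,
      forall x y z, ip (x + y) z = ip x z + ip y z,
      forall (a : R) x y, ip (a *: x) y = a * ip x y &
      forall x, ip x x = `|x| ^+ 2].

Variable V : normedModType R.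
Variable ip : V -> V -> R.

Definition monotone_op (S : V -> set V) : Prop :=
  forall x y u v, S x u -> S y v -> 0 <= ip (x - y) (u - v).

Definition maximal_monotone (S : V -> set V) : Prop :=
  monotone_op S /\
  forall S' : V -> set V, monotone_op S' ->
    (forall x u, S x u -> S' x u) -> forall x u, S' x u -> S x u.

Definition monotone_fun (f : V -> V) : Prop :=
  forall x y, 0 <= ip (x - y) (f x - f y).

(** x ∈ J_S(v) = (S + I)^{-1}(v), i.e. v ∈ S x + x *)
Definition resolvent_rel (S : V -> set V) (v x : V) : Prop := S x (v - x).

(** J_S(v) as a function (single-valued when S is maximal monotone) *)
Definition resolvent (S : V -> set V) (v : V) : V := xget 0 (resolvent_rel S v).

Definition scale_op (rho : R) (S : V -> set V) : V -> set V :=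
  fun x => [set rho *: a | a in S x].
Definition add_op (S : V -> set V) (f : V -> V) : V -> set V :=
  fun x => [set a + f x | a in S x].

Definition lin_at (D : V -> V) (u : V) : V -> V :=
  fun x => D u + 'd D u (x - u).

End Defs.

Section Bisection.
Variable R : realType.

Inductive bstate := BDone of R | BBracket of R & R.

Variables (q : R -> R) (lo hi : R).

Definition binit (rho0 : R) : bstate :=
  if (lo <= q rho0) && (q rho0 <= hi) then BDone rho0
  else if q rho0 < lo then BBracket rho0 (rho0 * hi / q rho0)
  else BBracket (rho0 * lo / q rho0) rho0.

Definition bstep (s : bstate) : bstate :=
  match s with
  | BDone r => BDone r
  | BBracket tm tp =>
      let t := Num.sqrt (tm * tp) in
      if (lo <= q t) && (q t <= hi) then BDone t
      else if hi < q t then BBracket tm t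
      else BBracket t tp
  end.

Definition bstate_after (rho0 : R) (n : nat) : bstate := iter n bstep (binit rho0).

End Bisection.

Section ProblemA.
Variables (R : realType) (H0 H : normedModType R).
Variables (A : H -> set H) (B C D : H -> H) (G : H0 -> H).
Variables (ell binv dhat m : R).
Variables (z : H0) (w : H).

Definition probA_arg (rho : R) : H := G z + rho *: w - rho *: (B (G z) + C (G z)).
Definition probA_op (rho : R) : H -> set H := scale_op rho (add_op A (lin_at D (G z))).
Definition probA_x (rho : R) : H := resolvent (probA_op rho) (probA_arg rho).

(** q(rho); [binv] stands for beta^{-1} *)
Definition probA_merit (rho : R) (x : H) : R :=
  4 * ell ^+ 2 * rho ^+ 2 + (binv + dhat) * rho + (m * rho * `|x - G z|) ^+ 2.
Definition probA_q (rho : R) : R := probA_merit rho (probA_x rho).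

Definition probA_y (rho : R) (x : H) : H :=
  rho^-1 *: (G z - x) + w + (B x - B (G z)) + (D x - lin_at D (G z) x).

(** output of the procedure after n steps (None = not yet terminated) *)
Definition probA_output (lo hi rho0 : R) (n : nat) : option (R * H * H) :=
  match bstate_after probA_q lo hi rho0 n with
  | BDone rho => Some (rho, probA_x rho, probA_y rho (probA_x rho))
  | BBracket _ _ => None
  end.

End ProblemA.

(* Main.v *)
Require Import Defs.
From HB Require Import structures.
From mathcomp Require Import all_boot all_order all_algebra.
From mathcomp Require Import all_classical all_reals all_analysis.
From mathcomp Require Import ring lra.
Import Order.TTheory GRing.Theory Num.Theory.
Import numFieldNormedType.Exports.
Local Open Scope classical_set_scope.
Local Open Scope ring_scope.

Set Implicit Arguments. Unset Strict Implicit. Unset Printing Implicit Defensive.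

Section IP.
Variables (R : realType) (V : normedModType R) (ip : V -> V -> R).
Hypothesis hip : is_inner_product ip.

Lemma ipC x y : ip x y = ip y x. Proof. by case: hip. Qed.
Lemma ipDl x y z : ip (x + y) z = ip x z + ip y z. Proof. by case: hip. Qed.
Lemma ipZl a x y : ip (a *: x) y = a * ip x y. Proof. by case: hip. Qed.
Lemma ipxx x : ip x x = `|x| ^+ 2. Proof. by case: hip. Qed.
Lemma ipDr x y z : ip x (y + z) = ip x y + ip x z.
Proof. by rewrite ipC ipDl !(ipC x). Qed.
Lemma ipZr a x y : ip x (a *: y) = a * ip x y.
Proof. by rewrite ipC ipZl ipC. Qed.
Lemma ip0l x : ip 0 x = 0.
Proof. by rewrite -(scale0r 0) ipZl mul0r. Qed.
Lemma ip0r x : ip x 0 = 0.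
Proof. by rewrite ipC ip0l. Qed.
Lemma ipNl x y : ip (- x) y = - ip x y.
Proof. by rewrite -scaleN1r ipZl mulN1r. Qed.
Lemma ipNr x y : ip x (- y) = - ip x y.
Proof. by rewrite ipC ipNl ipC. Qed.
Lemma ipBl x y z : ip (x - y) z = ip x z - ip y z.
Proof. by rewrite ipDl ipNl. Qed.
Lemma ipBr x y z : ip x (y - z) = ip x y - ip x z.
Proof. by rewrite ipDr ipNr. Qed.

Lemma normD2 x y : `|x + y| ^+ 2 = `|x| ^+ 2 + 2 * ip x y + `|y| ^+ 2.
Proof. rewrite -!ipxx ipDl !ipDr (ipC y x); lra. Qed.
Lemma normB2 x y : `|x - y| ^+ 2 = `|x| ^+ 2 - 2 * ip x y + `|y| ^+ 2.
Proof. by rewrite normD2 ipNr normrN; lra. Qed.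

Lemma ip_le x y : ip x y <= `|x| * `|y|.
Proof.
have [xy0|] := eqVneq (`|x| * `|y|) 0.
  move/eqP: xy0; rewrite mulf_eq0 !normr_eq0 => /orP[/eqP->|/eqP->].
    by rewrite ip0l normr0 mul0r.
  by rewrite ip0r normr0 mulr0.
move=> nz; have p : 0 < `|x| * `|y|.
  by rewrite lt_def nz mulr_ge0.
set a := `|x|; set b := `|y|.
have h : 0 <= ip (b *: x - a *: y) (b *: x - a *: y) by rewrite ipxx exprn_ge0.
rewrite !ipBl !ipBr !ipZl !ipZr !ipxx -/a -/b (ipC y x) in h.
rewrite -subr_ge0 -(pmulr_rge0 _ p).
have -> : a * b * (a * b - ip x y) =
  (b * (b * a ^+ 2) - a * (b * ip x y) - (b * (a * ip x y) - a * (a * b ^+ 2))) / 2.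
  by field.
apply: divr_ge0 => //; nra.
Qed.

Lemma ip_abs x y : `|ip x y| <= `|x| * `|y|.
Proof.
rewrite ler_norml ip_le andbT.
have := ip_le x (- y); rewrite ipNr normrN; lra.
Qed.

End IP.

Lemma cauchy_lim (R : realType) (V : completeNormedModType R) (x : nat -> V) :
  (forall e, 0 < e -> exists N, forall n k, (N <= n)%N -> (N <= k)%N -> `|x n - x k| < e) ->
  exists l, forall e, 0 < e -> exists N, forall n, (N <= n)%N -> `|l - x n| < e.
Proof.
move=> hc.
have cx : cvg (x @ \oo).
  apply/cauchy_cvgP/cauchy_ballP => e e0.
  rewrite near_map2.
  have [N hN] := hc e e0.
  exists ([set n | (N <= n)%N], [set n | (N <= n)%N]).
    by split; exists N.
  by case=> n k [/= hn hk]; rewrite -ball_normE /= distrC hN.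
exists (lim (x @ \oo)) => e e0.
have := (cvgrPdist_lt _ _).1 cx e e0.
by case=> N _ hN; exists N => n hn; apply: hN.
Qed.

Lemma invS_small (R : realType) (e : R) : 0 < e ->
  exists N, forall n, (N <= n)%N -> n.+1%:R^-1 < e.
Proof.
move=> e0; exists (Num.trunc (e^-1)) => n hn.
have h1 := truncnS_gt (e^-1).
have h2 : (Num.trunc e^-1).+1%:R <= n.+1%:R :> R by rewrite ler_nat ltnS.
have h3 := lt_le_trans h1 h2.
have np : (0:R) < n.+1%:R by rewrite ltr0Sn.
rewrite -(invrK e) ltf_pV2 ?posrE ?invr_gt0 //.
Qed.

Lemma small_lin (R : realType) (a k : R) :
  (forall t, 0 < t -> t <= 1 -> 0 <= a + t * k) -> 0 <= a.
Proof.
move=> h; apply/ler_addgt0Pr => e e0.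
pose t := Num.min 1 (e / (`|k| + 1)).
have k1 : 0 < `|k| + 1 by rewrite ltr_wpDl.
have t0 : 0 < t by rewrite lt_min ltr01 divr_gt0.
have t1 : t <= 1 by rewrite ge_min lexx.
have te : t <= e / (`|k| + 1) by rewrite ge_min lexx orbT.
have := h t t0 t1.
have : t * k <= e.
  apply: (le_trans (ler_norm _)); rewrite normrM (gtr0_norm t0).
  apply: (le_trans (ler_wpM2r (normr_ge0 k) te)).
  rewrite mulrAC ler_pdivrMr // ler_pM2l //; lra.
lra.
Qed.

Section Minty.
Variables (R : realType) (V : completeNormedModType R) (ip : V -> V -> R).
Hypothesis hip : is_inner_product ip.
Variable S : V -> set V.
Hypothesis hS : maximal_monotone ip S.

Let ipC := ipC hip. Let ipDl := ipDl hip. Let ipDr := ipDr hip.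
Let ipZl := ipZl hip. Let ipZr := ipZr hip. Let ipBl := ipBl hip.
Let ipBr := ipBr hip. Let ipNl := ipNl hip. Let ipNr := ipNr hip.
Let ipxx := ipxx hip. Let ip0l := ip0l hip. Let ip0r := ip0r hip.

Lemma mm_ext x u : (forall y b, S y b -> 0 <= ip (x - y) (u - b)) -> S x u.
Proof.
case: hS => hmon hmax hx.
pose S' := fun z => [set a | S z a \/ (z = x /\ a = u)].
apply: (hmax S'); last by right.
- move=> x1 y1 u1 v1 [h1|[-> ->]] [h2|[-> ->]].
  + exact: hmon.
  + have := hx _ _ h1; rewrite -(opprB x1) -(opprB u1) ipNl ipNr opprK //.
  + exact: hx.
  + by rewrite subrr ip0l.
- by move=> z a h; left.
Qed.

Lemma graph_ne : exists y b, S y b.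
Proof.
case: (pselect (exists y b, S y b)) => [//|hn].
exfalso; apply: (hn); exists 0, 0; apply: mm_ext => y b h.
by exfalso; apply: hn; exists y, b.
Qed.

Definition hval y b x u := ip x b + ip y u - ip y b + (`|x| ^+ 2 + `|u| ^+ 2) / 2.
Definition psi_le x u c := forall y b, S y b -> hval y b x u <= c.

Lemma mon_exp x y u b : S x u -> S y b ->
  ip x b + ip y u <= ip x u + ip y b.
Proof.
move=> h1 h2; case: hS => hmon _; have := hmon _ _ _ _ h1 h2.
rewrite ipBl !ipBr (ipC y u) (ipC y b); lra.
Qed.

Lemma psi_ge x u c : psi_le x u c -> 0 <= c.
Proof.
move=> hp; rewrite leNgt; apply/negP => c0.
have q0 : 0 <= `|x + u| ^+ 2 by rewrite exprn_ge0.
rewrite (normD2 hip) in q0.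
have hx : S x u.
  apply: mm_ext => y b hyb; have := hp y b hyb; rewrite /hval.
  rewrite ipBl !ipBr (ipC y u) (ipC y b); lra.
have := hp x u hx; rewrite /hval; lra.
Qed.

Definition Cs := [set c | exists x u, psi_le x u c].

Lemma Cs_inf : has_inf Cs.
Proof.
split.
  have [y0 [b0 h0]] := graph_ne.
  exists (hval y0 b0 y0 b0), y0, b0 => y b h.
  have := mon_exp h0 h; rewrite /hval; lra.
by exists 0 => c [x [u hp]]; exact: psi_ge hp.
Qed.

Definition mval := inf Cs.

Lemma mval_le x u c : psi_le x u c -> mval <= c.
Proof. by move=> hp; apply: ge_inf; [case: Cs_inf | exists x, u]. Qed.

Lemma psi_mid x1 u1 c1 x2 u2 c2 : psi_le x1 u1 c1 -> psi_le x2 u2 c2 ->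
  psi_le (2^-1 *: (x1 + x2)) (2^-1 *: (u1 + u2))
    ((c1 + c2) / 2 - (`|x1 - x2| ^+ 2 + `|u1 - u2| ^+ 2) / 8).
Proof.
move=> h1 h2 y b hyb; have := h1 y b hyb; have := h2 y b hyb; rewrite /hval.
rewrite !ipZl !ipZr !ipDl !ipDr !normrZ !exprMn.
rewrite (normD2 hip x1) (normD2 hip u1) (normB2 hip x1) (normB2 hip u1).
rewrite ger0_norm ?invr_ge0 ?ler0n //.
set a := ip x1 x2; set a' := ip u1 u2.
have -> : (2^-1 : R) ^+ 2 = 4^-1 by rewrite expr2 -invfM; congr (_^-1); ring.
lra.
Qed.


Lemma minseq : exists p : nat -> V * V,
  forall n, psi_le (p n).1 (p n).2 (mval + n.+1%:R^-1).
Proof.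
have h : forall n : nat, exists p : V * V, psi_le p.1 p.2 (mval + n.+1%:R^-1).
  move=> n; have np : (0:R) < n.+1%:R^-1 by rewrite invr_gt0 ltr0Sn.
  have [c [x [u hp]] hc] := inf_adherent np Cs_inf.
  by exists (x, u) => y b hyb; exact: le_trans (hp y b hyb) (ltW hc).
by have [f hf] := choice h; exists f.
Qed.

Lemma sq_lt (a e : R) : 0 <= a -> 0 < e -> a ^+ 2 < e ^+ 2 -> a < e.
Proof. move=> a0 e0 h; rewrite ltNge; apply/negP => ea; move: h; rewrite !expr2; nra. Qed.

Lemma hval_close y b x u x' u' d : 0 <= d -> d <= 1 ->
  `|x - x'| <= d -> `|u - u'| <= d ->
  hval y b x u <= hval y b x' u' + d * (`|b| + `|y| + `|x| + `|u| + 1).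
Proof.
move=> d0 d1 hx hu; rewrite /hval -!ipxx.
have ex : ip x x - ip x' x' = ip (x - x') (x + x').
  by rewrite ipBl !ipDr (ipC x' x); ring.
have eu : ip u u - ip u' u' = ip (u - u') (u + u').
  by rewrite ipBl !ipDr (ipC u' u); ring.
have nx' : `|x'| <= `|x| + d.
  have -> : x' = x - (x - x') by rewrite opprB addrC subrK.
  by apply: (le_trans (ler_normB _ _)); rewrite lerD2l.
have nu' : `|u'| <= `|u| + d.
  have -> : u' = u - (u - u') by rewrite opprB addrC subrK.
  by apply: (le_trans (ler_normB _ _)); rewrite lerD2l.
have t1 : ip (x - x') b <= d * `|b|.
  apply: (le_trans (ip_le hip _ _)); exact: ler_wpM2r.
have t2 : ip y (u - u') <= d * `|y|.
  apply: (le_trans (ip_le hip _ _)); rewrite mulrC; exact: ler_wpM2r.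
have t3 : ip (x - x') (x + x') <= d * (2 * `|x| + 1).
  apply: (le_trans (ip_le hip _ _)); apply: ler_pM => //.
  apply: (le_trans (ler_normD _ _)); lra.
have t4 : ip (u - u') (u + u') <= d * (2 * `|u| + 1).
  apply: (le_trans (ip_le hip _ _)); apply: ler_pM => //.
  apply: (le_trans (ler_normD _ _)); lra.
have ex2 : ip x b = ip x' b + ip (x - x') b by rewrite ipBl; ring.
have eu2 : ip y u = ip y u' + ip y (u - u') by rewrite ipBr; ring.
rewrite ex2 eu2; lra.
Qed.

Section Lim.
Variable p : nat -> V * V.
Hypothesis hp : forall n, psi_le (p n).1 (p n).2 (mval + n.+1%:R^-1).

Lemma seq_close n k : `|(p n).1 - (p k).1| ^+ 2 + `|(p n).2 - (p k).2| ^+ 2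
  <= 4 * (n.+1%:R^-1 + k.+1%:R^-1).
Proof. have := mval_le (psi_mid (hp n) (hp k)); set a := n.+1%:R^-1; set c := k.+1%:R^-1; lra. Qed.

Lemma seq_cauchy (f : V * V -> V) : (f = fst \/ f = snd) ->
  forall e, 0 < e -> exists N, forall n k, (N <= n)%N -> (N <= k)%N ->
  `|f (p n) - f (p k)| < e.
Proof.
move=> hf e e0; have e8 : 0 < e ^+ 2 / 8 by rewrite divr_gt0 ?exprn_gt0.
have [N hN] := invS_small e8; exists N => n k hn hk.
apply: sq_lt => //; have := seq_close n k; have := hN n hn; have := hN k hk.
have := exprn_ge0 2 (normr_ge0 ((p n).1 - (p k).1)).
have := exprn_ge0 2 (normr_ge0 ((p n).2 - (p k).2)).
set a := n.+1%:R^-1; set c := k.+1%:R^-1.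
by case: hf => ->; lra.
Qed.

Lemma lim_pt : exists xs us, psi_le xs us mval.
Proof.
have [xs hxs] := cauchy_lim (x := fun n => (p n).1) (seq_cauchy (or_introl erefl)).
have [us hus] := cauchy_lim (x := fun n => (p n).2) (seq_cauchy (or_intror erefl)).
exists xs, us => y b hyb; apply/ler_addgt0Pr => e e0.
set K := `|b| + `|y| + `|xs| + `|us| + 1.
have K0 : 0 < K by rewrite /K; have := normr_ge0 b; have := normr_ge0 y;
  have := normr_ge0 xs; have := normr_ge0 us; lra.
pose d := Num.min 1 (e / (2 * K)).
have d0 : 0 < d by rewrite lt_min ltr01 divr_gt0 ?mulr_gt0.
have d1 : d <= 1 by rewrite ge_min lexx.
have dK : d * K <= e / 2.
  have : d <= e / (2 * K) by rewrite ge_min lexx orbT.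
  rewrite invfM => h; have := ler_wpM2r (ltW K0) h.
  by rewrite -!mulrA mulVf ?gt_eqF // mulr1 mulrC.
have e2 : 0 < e / 2 by rewrite divr_gt0.
have [N1 h1] := invS_small e2.
have [N2 h2] := hxs d d0.
have [N3 h3] := hus d d0.
set n := maxn (maxn N1 N2) N3.
have hn1 : (N1 <= n)%N by rewrite /n !leq_max leqnn.
have hn2 : (N2 <= n)%N by rewrite /n !leq_max leqnn orbT.
have hn3 : (N3 <= n)%N by rewrite /n !leq_max leqnn orbT.
have := hval_close y b (ltW d0) d1 (ltW (h2 n hn2)) (ltW (h3 n hn3)).
have := hp n hyb; have := h1 n hn1.
rewrite -/K; set a := n.+1%:R^-1; lra.
Qed.

End Lim.

Lemma minty0 : exists x, S x (- x).
Proof.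
have [p hp] := minseq.
have [xs [us hl]] := lim_pt hp.
set Q := (`|xs| ^+ 2 + `|us| ^+ 2) / 2.
have var : forall y1 b1, S y1 b1 ->
    0 <= - mval + ip y1 b1 - Q + ip xs y1 + ip us b1.
  move=> y1 b1 h1.
  apply: (@small_lin _ _ (Q - (ip xs y1 + ip us b1) + (`|y1| ^+ 2 + `|b1| ^+ 2) / 2)).
  move=> t t0 t1.
  have t1' : 0 <= 1 - t by lra.
  set q1 := (1 - t) *: xs + t *: y1; set q2 := (1 - t) *: us + t *: b1.
  have hq : psi_le q1 q2 ((1 - t) * (mval - Q) + t * ip y1 b1
                           + (`|q1| ^+ 2 + `|q2| ^+ 2) / 2).
    move=> y b hyb; rewrite /hval /q1 /q2 !ipDl !ipDr !ipZl !ipZr -/q1 -/q2.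
    have h1' := ler_wpM2l t1' (hl y b hyb).
    have h2' := ler_wpM2l (ltW t0) (mon_exp h1 hyb).
    rewrite /hval -/Q in h1'.
    set N := (`|q1| ^+ 2 + `|q2| ^+ 2) / 2.
    lra.
  have := mval_le hq.
  rewrite /q1 /q2 !(normD2 hip) !normrZ !ipZl !ipZr (ger0_norm t1') (gtr0_norm t0).
  rewrite /Q -(pmulr_rge0 _ t0) => h; nra.
exists (2^-1 *: (xs - us)); apply: mm_ext => y b hyb.
have := var y b hyb; have := hl y b hyb; rewrite /hval.
have := exprn_ge0 2 (normr_ge0 (xs + us)); rewrite (normD2 hip).
rewrite !(ipBl, ipBr, ipNl, ipNr, ipZl, ipZr, ipDl, ipDr).
rewrite (ipC us xs) (ipC y xs) !ipxx /Q; lra.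
Qed.

End Minty.

Lemma minty (R : realType) (V : completeNormedModType R) (ip : V -> V -> R)
  (hip : is_inner_product ip) (S : V -> set V) :
  maximal_monotone ip S -> forall v, exists x, S x (v - x).
Proof.
move=> [hmon hmax] v.
pose S' := fun x => [set a | S x (a + v)].
have : maximal_monotone ip S'.
  split.
    move=> x y u b /= h1 h2; have := hmon _ _ _ _ h1 h2.
    have -> : u + v - (b + v) = u - b by rewrite opprD addrACA subrr addr0.
    by [].
  move=> T hT hsub x u hxu; rewrite /S' /=.
  pose T' := fun x => [set a | T x (a - v)].
  apply: (hmax T').
  - move=> x1 y1 u1 v1 /= h1 h2; have := hT _ _ _ _ h1 h2.
    have -> : u1 - v - (v1 - v) = u1 - v1 by rewrite opprD addrACA opprK addNr addr0.
    by [].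
  - by move=> x1 a h; apply: hsub; rewrite /S' /= subrK.
  - by rewrite /T' /= addrK.
move=> /(minty0 hip) [x hx]; exists x; by rewrite /S' /= addrC in hx.
Qed.

Section Ops.
Variables (R : realType) (V : completeNormedModType R) (ip : V -> V -> R).
Hypothesis hip : is_inner_product ip.

Let ipC := ipC hip. Let ipDl := ipDl hip. Let ipDr := ipDr hip.
Let ipZl := ipZl hip. Let ipZr := ipZr hip. Let ipBl := ipBl hip.
Let ipBr := ipBr hip. Let ipNl := ipNl hip. Let ipNr := ipNr hip.
Let ipxx := ipxx hip. Let ip0l := ip0l hip. Let ip0r := ip0r hip.

Lemma scale_mm (S : V -> set V) (l : R) : 0 < l -> maximal_monotone ip S ->
  maximal_monotone ip (scale_op l S).
Proof.
move=> l0 [hmon hmax]; split.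
  move=> x y _ _ [a ha <-] [b hb <-].
  by rewrite -scalerBr ipZr mulr_ge0 ?(ltW l0) ?hmon.
move=> T hT hsub x c hxc.
pose T' := fun x => [set a | T x (l *: a)].
have : S x (l^-1 *: c).
  apply: (hmax T').
  - move=> x1 y1 a1 b1 /= h1 h2; have := hT _ _ _ _ h1 h2.
    by rewrite -scalerBr ipZr pmulr_rge0.
  - by move=> x1 a h; apply: hsub; exists a.
  - by rewrite /T' /= scalerA mulfV ?gt_eqF // scale1r.
move=> h; exists (l^-1 *: c) => //.
by rewrite scalerA mulfV ?gt_eqF // scale1r.
Qed.

Lemma add_mm (A : V -> set V) (L : V -> V) (K : R) :
  maximal_monotone ip A -> monotone_fun ip L -> 0 <= K ->
  (forall x y, `|L x - L y| <= K * `|x - y|) ->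
  maximal_monotone ip (add_op A L).
Proof.
move=> hA hL K0 hK; split.
  move=> x y _ _ [a ha <-] [b hb <-].
  have := hA.1 _ _ _ _ ha hb; have := hL x y.
  have -> : a + L x - (b + L y) = (a - b) + (L x - L y).
    by rewrite opprD addrACA.
  rewrite (ipDr (x - y) (a - b)); lra.
move=> T hT hsub x u hxu.
pose t := (2 * K + 2)^-1.
have t0 : 0 < t by rewrite invr_gt0; lra.
have Kt : K * t <= 2^-1.
  rewrite /t ler_pdivrMr; last lra.
  rewrite mulrC ler_pdivlMr //; lra.
have [y [a ha hta]] := minty hip (scale_mm t0 hA) (x + t *: (u - L x)).
have hTy : T y (a + L y) by apply: hsub; exists a.
set d := a - (u - L x).
have hxy : x - y = t *: d by rewrite /d scalerBr hta addrAC addrK.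
have e2 : u - (a + L y) = - d + (L x - L y).
  by rewrite /d opprB addrA (addrAC (u - L x)) subrK opprD addrA.
have := hT _ _ _ _ hxu hTy; rewrite hxy e2 ipZl pmulr_rge0 // ipDr ipNr ipxx => h.
have h1 : ip d (L x - L y) <= `|d| * (K * (t * `|d|)).
  apply: (le_trans (ip_le hip _ _)); apply: ler_wpM2l => //.
  by have := hK x y; rewrite hxy normrZ gtr0_norm.
have nd : `|d| ^+ 2 <= 0.
  have := normr_ge0 d; rewrite expr2 in h *; nra.
have d0 : d = 0.
  by apply/eqP; rewrite -normr_eq0 -sqrf_eq0 eq_le nd exprn_ge0.
have yx : y = x by apply/eqP; rewrite eq_sym -subr_eq0 hxy d0 scaler0.
exists a; first by rewrite -yx.
by move: d0; rewrite /d => /subr0_eq ->; rewrite subrK.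
Qed.

Lemma dmon (D : V -> V) u : monotone_fun ip D -> differentiable D u ->
  forall h, 0 <= ip h ('d D u h).
Proof.
move=> hD hd h; rewrite -deriveE //.
have hdv := diff_derivable (v:=h) hd.
set dv := 'D_h D u.
set q := fun t : R => t^-1 *: ((D \o shift u) (t *: h) - D u).
have cv : q @ (0:R)^' --> dv by exact: hdv.
have pos : forall t : R, 0 <= ip h (q t).
  move=> t; rewrite /q ipZr /=; have [->|t0] := eqVneq t 0.
    by rewrite invr0 mul0r.
  have := hD (t *: h + u) u; rewrite addrK ipZl => m.
  have -> : t^-1 * ip h (D (t *: h + u) - D u) =
            (t^-1) ^+ 2 * (t * ip h (D (t *: h + u) - D u)) by field.
  by rewrite mulr_ge0 ?sqr_ge0.
rewrite leNgt; apply/negP => neg.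
set n := `|h|.
have n0 : 0 <= n := normr_ge0 h.
set e := - ip h dv / (n + 1).
have e0 : 0 < e by rewrite divr_gt0; lra.
have en : e * (n + 1) = - ip h dv.
  by rewrite /e mulfVK // gt_eqF //; lra.
have hn : \forall t \near (0:R)^', `|dv - q t| < e.
  by move: (e) (e0); apply/cvgrPdist_lt.
have [t ht] := @filter_ex _ _ (Proper_dnbhs_numFieldType (0:R)) _ hn.
have h1 := ip_abs hip h (dv - q t).
have h2 : ip h dv = ip h (q t) + ip h (dv - q t) by rewrite ipBr; ring.
have h3 : n * `|dv - q t| <= n * e by apply: ler_wpM2l => //; exact: ltW.
have := pos t; rewrite ler_norml in h1; case/andP: h1 => h1 _.
rewrite -/n in h1; lra.
Qed.

Lemma dlip (D : V -> V) u : differentiable D u ->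
  exists K, 0 <= K /\ forall h, `|'d D u h| <= K * `|h|.
Proof.
move=> hd; have := (linear_bounded_continuous ('d D u)).2 (diff_continuous hd).
move=> /linear_boundedP /pinfty_ex_gt0 [K K0 hK]; exists K; split => //.
exact: ltW.
Qed.

Lemma lin_atB (D : V -> V) u x y :
  lin_at D u x - lin_at D u y = 'd D u (x - y).
Proof.
rewrite /lin_at opprD addrACA subrr add0r -linearB.
by rewrite opprB addrA subrK.
Qed.

Lemma resolvent_exists (A : V -> set V) (D : V -> V) g (rho : R) v :
  maximal_monotone ip A -> monotone_fun ip D -> differentiable D g -> 0 < rho ->
  exists x, resolvent_rel (scale_op rho (add_op A (lin_at D g))) v x.
Proof.
move=> hA hD hd r0.
have [K [K0 hK]] := dlip hd.
have mL : monotone_fun ip (lin_at D g).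
  by move=> x y; rewrite lin_atB; apply: dmon.
have lL : forall x y, `|lin_at D g x - lin_at D g y| <= K * `|x - y|.
  by move=> x y; rewrite lin_atB.
have [x hx] := minty hip (scale_mm r0 (add_mm hA mL K0 lL)) v.
by exists x.
Qed.

End Ops.

Section Bis.
Variables (R : realType) (q : R -> R) (lo hi : R).
Hypothesis hlo : 0 < lo.
Hypothesis hlohi : lo < hi.
Hypothesis Q1 : forall r, 0 < r -> 0 < q r.
Hypothesis Q2 : forall s t, 0 < s -> s <= t -> t * q s <= s * q t.

Definition binv (b0 E : R) (n : nat) (s : bstate R) : Prop :=
  match s with
  | BDone r => 0 < r /\ lo <= q r <= hi
  | BBracket a b => 0 < a /\ a <= b /\ b <= b0 /\ q a <= lo /\ hi <= q b /\
                       (b - a) * n.+1%:R <= a * E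
  end.

Lemma binv_step b0 E n s : binv b0 E n s -> binv b0 E n.+1 (bstep q lo hi s).
Proof.
case: s => [r //|a b] /= [a0 [ab [bb0 [qa [qb wid]]]]].
set t := Num.sqrt (a * b).
have ab0 : 0 <= a * b by apply: mulr_ge0; lra.
have t0 : 0 < t by rewrite sqrtr_gt0; apply: mulr_gt0; lra.
have tt : t * t = a * b by rewrite -expr2 sqr_sqrtr.
have at' : a <= t by nra.
have tb : t <= b by nra.
set N := (n.+1%:R : R).
have N0 : 1 <= N by rewrite ler1n.
have eN : n.+2%:R = N + 1 :> R by rewrite /N -addn1 natrD.
case: ifP => [/andP[h1 h2]|hn]; first by split => //; apply/andP.
case: ifP => hq.
  rewrite /= eN; split; first lra; split; first lra; split; first lra.
  split; first lra; split; first exact: ltW.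
  have h1 : 2 * (t - a) <= b - a by nra.
  nra.
rewrite /= eN; split; first lra; split; first lra; split; first lra.
split.
  have : ~~ ((lo <= q t) && (q t <= hi)) by rewrite hn.
  rewrite negb_and -!ltNge hq orbF => /ltW //.
split; first lra.
have h1 : a * (b - t) = t * (t - a) by nra.
have s1 : 2 * (t - a) <= b - a by nra.
have s2 : (t - a) * (N + 1) <= (b - a) * N by nra.
have s3 : t * ((t - a) * (N + 1)) <= t * ((b - a) * N) by rewrite ler_wpM2l //; lra.
have s4 : t * ((b - a) * N) <= t * (a * E) by rewrite ler_wpM2l //; lra.
have h1' : a * ((b - t) * (N + 1)) = t * ((t - a) * (N + 1)) by rewrite mulrA h1 mulrA.
rewrite -(ler_pM2l a0).
have -> : a * (t * E) = t * (a * E) by ring.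
lra.
Qed.


Lemma binv_after b0 E n s0 : binv b0 E 0 s0 ->
  binv b0 E n (iter n (bstep q lo hi) s0).
Proof. move=> h; elim: n => [//|n IH] /=; exact: binv_step. Qed.

Hypothesis Q3 : forall b0, 0 < b0 -> exists K, 0 <= K /\
  forall s t, 0 < s -> s <= t -> t <= b0 -> q t - q s <= K * (t - s).

Lemma binit_ok rho0 : 0 < rho0 ->
  exists b0 E, 0 < b0 /\ 0 <= E /\ binv b0 E 0 (binit q lo hi rho0).
Proof.
move=> r0; have q0 := Q1 r0; rewrite /binit.
case: ifP => [/andP[h1 h2]|hn].
  by exists 1, 0; split; [lra|split; [lra|]]; split => //; apply/andP.
case: ifP => hq.
  set b0 := rho0 * hi / q rho0.
  have e1 : b0 * q rho0 = rho0 * hi by rewrite /b0 mulfVK // gt_eqF.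
  have rb : rho0 <= b0.
    rewrite /b0 ler_pdivlMr // ler_pM2l //; exact: (le_trans (ltW hq) (ltW hlohi)).
  have b00 : 0 < b0 by lra.
  exists b0, ((b0 - rho0) / rho0); split => //; split.
    by rewrite divr_ge0; lra.
  rewrite /=; split => //; split => //; split => //; split; first exact: ltW.
  split.
    have := Q2 r0 rb; rewrite e1 => h.
    by rewrite -(ler_pM2l r0).
  by rewrite mulr1 mulrC mulfVK // gt_eqF.
have hq' : hi < q rho0.
  have : ~~ ((lo <= q rho0) && (q rho0 <= hi)) by rewrite hn.
  rewrite negb_and -!ltNge => /orP[h|//].
  by move: (negbT hq) => /negP /(_ h).
set a0 := rho0 * lo / q rho0.
have e1 : a0 * q rho0 = rho0 * lo by rewrite /a0 mulfVK // gt_eqF.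
have a00 : 0 < a0 by rewrite /a0 divr_gt0 // mulr_gt0.
have ar : a0 <= rho0.
  rewrite /a0 ler_pdivrMr // ler_pM2l //; lra.
exists rho0, ((rho0 - a0) / a0); split => //; split.
  by rewrite divr_ge0; lra.
rewrite /=; split => //; split => //; split => //; split.
  have := Q2 a00 ar; rewrite e1 => h.
  by rewrite -(ler_pM2l r0).
split; first exact: ltW.
by rewrite mulr1 mulrC mulfVK // gt_eqF.
Qed.

Lemma bis_term rho0 : 0 < rho0 -> exists n r,
  bstate_after q lo hi rho0 n = BDone r /\ 0 < r /\ lo <= q r <= hi.
Proof.
move=> r0; have [b0 [E [b00 [E0 hi0]]]] := binit_ok r0.
have [K [K0 hK]] := Q3 b00.
set X := K * b0 * E / (hi - lo).
set n := Num.trunc X.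
have hX : X < n.+1%:R := truncnS_gt X.
have := binv_after n hi0; rewrite /bstate_after.
case Hs: (iter n _ _) => [r|a b].
  by move=> [hr1 hr2]; exists n, r.
move=> [a0 [ab [bb0 [qa [qb wid]]]]].
exfalso.
set N := (n.+1%:R : R).
have N0 : 0 <= N by rewrite ler0n.
have c1 := hK a b a0 ab bb0.
have c2 : K * ((b - a) * N) <= K * (a * E) by rewrite ler_wpM2l.
have c3 : K * (a * E) <= K * (b0 * E).
  rewrite ler_wpM2l // ler_wpM2r //; lra.
have c4 : (hi - lo) * N <= K * (b - a) * N by rewrite ler_wpM2r //; lra.
have c5 : X * (hi - lo) = K * b0 * E by rewrite /X mulfVK // gt_eqF // subr_gt0.
have c6 : X * (hi - lo) < N * (hi - lo) by rewrite ltr_pM2r // subr_gt0.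
lra.
Qed.

End Bis.

Section Res.
Variables (R : realType) (V : normedModType R) (ip : V -> V -> R).
Hypothesis hip : is_inner_product ip.
Variables (X : R -> V) (g : V).
Hypothesis KI : forall r s, 0 < r -> 0 < s ->
  0 <= ip ((g - X s) - (g - X r)) (r^-1 *: (g - X r) - s^-1 *: (g - X s)).

Let ipC := ipC hip. Let ipDl := ipDl hip. Let ipDr := ipDr hip.
Let ipZl := ipZl hip. Let ipZr := ipZr hip. Let ipBl := ipBl hip.
Let ipBr := ipBr hip. Let ipxx := ipxx hip.

Lemma N_mono r s : 0 < r -> r <= s -> `|g - X r| <= `|g - X s|.
Proof.
move=> r0 rs; have s0 : 0 < s by lra.
set P := g - X r; set Q := g - X s.
have : 0 <= ip (Q - P) (r^-1 *: P - s^-1 *: Q) := KI r0 s0.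
clearbody P Q; rewrite !ipBl !ipBr !ipZr !ipxx (ipC Q P) => h.
have cs := ip_le hip P Q.
have p0 : 0 <= `|P| := normr_ge0 P.
have q0 : 0 <= `|Q| := normr_ge0 Q.
have r10 : 0 < r^-1 by rewrite invr_gt0.
have s10 : 0 < s^-1 by rewrite invr_gt0.
have sr : s^-1 <= r^-1 by rewrite lef_pV2.
have h2 : r^-1 * `|P| ^+ 2 + s^-1 * `|Q| ^+ 2 <= (r^-1 + s^-1) * (`|P| * `|Q|).
  apply: (le_trans _ (ler_wpM2l _ cs)); lra.
have F : 0 <= (`|P| - `|Q|) * (s^-1 * `|Q| - r^-1 * `|P|).
  move: h2; rewrite !expr2; lra.
rewrite leNgt; apply/negP => pq.
have Y : 0 <= s^-1 * `|Q| - r^-1 * `|P|.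
  have pq' : 0 < `|P| - `|Q| by rewrite subr_gt0.
  by rewrite -(pmulr_rge0 _ pq').
nra.
Qed.

Lemma N_diff r s : 0 < r -> r <= s ->
  `|X s - X r| <= (s - r) / s * `|g - X s|.
Proof.
move=> r0 rs; have s0 : 0 < s by lra.
have -> : X s - X r = (g - X r) - (g - X s).
  by rewrite opprB [RHS]addrC addrA subrK.
set P := g - X r; set Q := g - X s.
have : 0 <= ip (Q - P) (r^-1 *: P - s^-1 *: Q) := KI r0 s0.
clearbody P Q; rewrite !ipBl !ipBr !ipZr !ipxx (ipC Q P) => h.
have dd := normB2 hip P Q.
have cs := ip_le hip (Q - P) Q.
rewrite ipBl ipxx (distrC Q P) in cs.
set d := `|P - Q| in dd cs *.
have d0 : 0 <= d := normr_ge0 _.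
have q0 : 0 <= `|Q| := normr_ge0 Q.
have r10 : 0 < r^-1 by rewrite invr_gt0.
have s10 : 0 < s^-1 by rewrite invr_gt0.
have sr : s^-1 <= r^-1 by rewrite lef_pV2.
have e1 : (r^-1 - s^-1) * (`|Q| ^+ 2 - ip P Q) <= (r^-1 - s^-1) * (d * `|Q|).
  by rewrite ler_wpM2l //; lra.
have e2 : r^-1 * d ^+ 2 <= (r^-1 - s^-1) * (d * `|Q|).
  rewrite dd; lra.
have e3 : d ^+ 2 <= (s - r) / s * (d * `|Q|).
  have -> : (s - r) / s = r * (r^-1 - s^-1).
    by field; rewrite ?gt_eqF.
  rewrite -mulrA; apply: le_trans (ler_wpM2l (ltW r0) e2).
  by rewrite mulrA mulfV ?gt_eqF // mul1r.
have c0 : 0 <= (s - r) / s by rewrite divr_ge0; lra.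
have [->|dn] := eqVneq d 0; first by rewrite mulr_ge0.
have dp : 0 < d by rewrite lt_def dn d0.
rewrite -(ler_pM2l dp); move: e3; rewrite expr2; lra.
Qed.

Variables (ell cc m : R).
Hypothesis hcc : 0 < cc.

Definition qf r := 4 * ell ^+ 2 * r ^+ 2 + cc * r + (m * r * `|X r - g|) ^+ 2.

Lemma qf_pos r : 0 < r -> 0 < qf r.
Proof.
move=> r0; rewrite /qf.
have := sqr_ge0 (m * r * `|X r - g|); have := sqr_ge0 ell; have := sqr_ge0 r.
have : 0 < cc * r by rewrite mulr_gt0.
rewrite !expr2; nra.
Qed.

Lemma Nm r s : 0 < r -> r <= s -> `|X r - g| <= `|X s - g|.
Proof. by move=> r0 rs; rewrite distrC (distrC (X s)); exact: N_mono. Qed.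

Lemma qf_Q2 s t : 0 < s -> s <= t -> t * qf s <= s * qf t.
Proof.
move=> s0 st; rewrite -subr_ge0.
set Ns := `|X s - g|; set Nt := `|X t - g|.
have hN : Ns <= Nt by exact: Nm.
have N0 : 0 <= Ns := normr_ge0 _.
have a1 : s * Ns ^+ 2 <= t * Nt ^+ 2.
  have a0 : Ns ^+ 2 <= Nt ^+ 2 by rewrite !expr2; nra.
  apply: ler_pM => //; try lra; exact: sqr_ge0.
have -> : s * qf t - t * qf s =
  s * t * (4 * ell ^+ 2 * (t - s) + m ^+ 2 * (t * Nt ^+ 2 - s * Ns ^+ 2)).
  by rewrite /qf -/Ns -/Nt !exprMn; ring.
apply: mulr_ge0; first by apply: mulr_ge0; lra.
have b1 : 0 <= 4 * ell ^+ 2 * (t - s).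
  by apply: mulr_ge0; [rewrite mulr_ge0 ?sqr_ge0 | lra].
have b2 : 0 <= m ^+ 2 * (t * Nt ^+ 2 - s * Ns ^+ 2).
  by apply: mulr_ge0; [rewrite sqr_ge0 | lra].
lra.
Qed.

Lemma qf_Q3 b0 : 0 < b0 -> exists K, 0 <= K /\
  forall s t, 0 < s -> s <= t -> t <= b0 -> qf t - qf s <= K * (t - s).
Proof.
move=> b00; set Nb := `|X b0 - g|.
exists (8 * ell ^+ 2 * b0 + cc + 4 * m ^+ 2 * b0 * Nb ^+ 2); split.
  have p1 : 0 <= ell ^+ 2 * b0 by rewrite mulr_ge0 ?sqr_ge0 //; lra.
  have p2 : 0 <= m ^+ 2 * b0 * Nb ^+ 2.
    by rewrite mulr_ge0 ?sqr_ge0 // mulr_ge0 ?sqr_ge0 //; lra.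
  have := hcc; lra.
move=> s t s0 st tb.
have t0 : 0 < t by lra.
set Ns := `|X s - g|; set Nt := `|X t - g|.
have hN : Ns <= Nt by exact: Nm.
have hNb : Nt <= Nb by exact: Nm.
have N0 : 0 <= Ns := normr_ge0 _.
have D := N_diff s0 st.
rewrite (distrC g) -/Nt in D.
have tri : Nt - Ns <= `|X t - X s|.
  rewrite lerBlDr /Nt /Ns.
  have -> : X t - g = (X t - X s) + (X s - g) by rewrite addrA subrK.
  exact: ler_normD.
have f1 : t * (Nt - Ns) <= (t - s) * Nt.
  have : t * (Nt - Ns) <= t * ((t - s) / t * Nt).
    by apply: ler_wpM2l; [lra|exact: le_trans tri D].
  by rewrite mulrA mulrCA mulfV ?gt_eqF // mulr1.
have f2 : s * (Nt - Ns) <= t * (Nt - Ns) by apply: ler_wpM2r; lra.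
have f3 : t * Nt - s * Ns <= 2 * (t - s) * Nt by nra.
have f4 : 0 <= t * Nt - s * Ns.
  rewrite subr_ge0; apply: ler_pM => //; lra.
have f5 : t * Nt + s * Ns <= 2 * (b0 * Nb).
  have : t * Nt <= b0 * Nb by apply: ler_pM => //; lra.
  have : s * Ns <= b0 * Nb by apply: ler_pM => //; lra.
  lra.
have f6 : (t * Nt) ^+ 2 - (s * Ns) ^+ 2 <= (2 * (t - s) * Nt) * (2 * (b0 * Nb)).
  rewrite subr_sqr; apply: ler_pM => //; nra.
have f7 : (2 * (t - s) * Nt) * (2 * (b0 * Nb)) <= 4 * b0 * Nb ^+ 2 * (t - s).
  have : (t - s) * Nt <= (t - s) * Nb by apply: ler_wpM2l; lra.
  have : 0 <= b0 * Nb by apply: mulr_ge0; lra.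
  rewrite expr2; nra.
have f8 : t ^+ 2 - s ^+ 2 <= 2 * b0 * (t - s) by rewrite subr_sqr; nra.
have f9 : 4 * ell ^+ 2 * (t ^+ 2 - s ^+ 2) <= 4 * ell ^+ 2 * (2 * b0 * (t - s)).
  by apply: ler_wpM2l => //; rewrite mulr_ge0 ?sqr_ge0.
have f10 : m ^+ 2 * ((t * Nt) ^+ 2 - (s * Ns) ^+ 2) <= m ^+ 2 * (4 * b0 * Nb ^+ 2 * (t - s)).
  by apply: ler_wpM2l; rewrite ?sqr_ge0 //; exact: le_trans f6 f7.
rewrite /qf -/Ns -/Nt !exprMn.
rewrite !exprMn in f10.
lra.
Qed.

End Res.

Lemma cform (R : realType) (V : lmodType R) (r : R) (g w bc x c : V) : r != 0 ->
  r *: c = g + r *: w - r *: bc - x -> c = r^-1 *: (g - x) + (w - bc).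
Proof.
move=> r0 h; apply: (scalerI r0); rewrite h scalerDr scalerA mulfV // scale1r scalerBr.
by rewrite [LHS]addrAC [RHS]addrA (addrAC g (- x)).
Qed.

Unset Implicit Arguments.

Theorem proposition5p8 (R : realType)
  (H0 H : completeNormedModType R)
  (ip0 : H0 -> H0 -> R) (ip : H -> H -> R)
  (hip0 : is_inner_product ip0) (hip : is_inner_product ip)
  (A : H -> set H) (B C D : H -> H) (G : {linear H0 -> H})
  (ell binv dhat m theta_lo theta_hi : R)
  (hA : maximal_monotone ip A)
  (hell : 0 <= ell)
  (hBmon : monotone_fun ip B)
  (hBlip : forall x y, `|B x - B y| <= ell * `|x - y|)
  (hbinv : 0 <= binv)
  (hC : forall x y, `|C x - C y| ^+ 2 <= binv * ip (x - y) (C x - C y))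
  (hDmon : monotone_fun ip D)
  (hDdiff : forall u, differentiable D u)
  (hDlip : forall u1 u2 h, `|'d D u1 h - 'd D u2 h| <= m * `|u1 - u2| * `|h|)
  (hG : continuous G)
  (hdhat : 0 < dhat) (hm : 0 < m)
  (hlo : 0 < theta_lo) (hlohi : theta_lo < theta_hi)
  (z : H0) (w : H)
  (hw : ~ (exists a, A (G z) a /\ w = a + B (G z) + C (G z) + D (G z)))
  (rho0 : R) (hrho0 : 0 < rho0) :
  exists (n : nat) (rho : R) (x y : H),
    probA_output A B C D G ell binv dhat m z w theta_lo theta_hi rho0 n
      = Some (rho, x, y)
    /\ 0 < rho
    /\ resolvent_rel (scale_op rho (add_op A (lin_at D (G z))))
         (G z + rho *: w - rho *: (B (G z) + C (G z))) x
    /\ theta_lo <= 4 * ell ^+ 2 * rho ^+ 2 + (binv + dhat) * rho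
                   + (m * rho * `|x - G z|) ^+ 2 <= theta_hi
    /\ y = rho^-1 *: (G z - x) + w + (B x - B (G z)) + (D x - lin_at D (G z) x).
Proof.
set g := G z.
have hdg : differentiable D g := hDdiff g.
have [K [K0 hK]] := dlip hdg.
have mL : monotone_fun ip (lin_at D g).
  move=> x y; rewrite lin_atB; exact: (dmon hip hDmon hdg (x - y)).
have lL : forall x y, `|lin_at D g x - lin_at D g y| <= K * `|x - y|.
  by move=> x y; rewrite lin_atB.
have hT := add_mm hip hA mL K0 lL.
set X := fun r => probA_x A B C D G z w r.
have hX : forall r, 0 < r -> resolvent_rel (scale_op r (add_op A (lin_at D g)))
    (g + r *: w - r *: (B g + C g)) (X r).
  move=> r r0; have [x hx] := resolvent_exists hip
    (g + r *: w - r *: (B g + C g)) hA hDmon hdg r0.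
  exact: xgetI hx.
have hc : forall r, 0 < r -> add_op A (lin_at D g) (X r)
    (r^-1 *: (g - X r) + (w - (B g + C g))).
  move=> r r0; have [c hc1 hc2] := hX r r0.
  have r0' : r != 0 by rewrite gt_eqF.
  by rewrite -(cform r0' hc2).
have KI : forall r s, 0 < r -> 0 < s ->
  0 <= ip ((g - X s) - (g - X r)) (r^-1 *: (g - X r) - s^-1 *: (g - X s)).
  move=> r s r0 s0; have := hT.1 _ _ _ _ (hc r r0) (hc s s0).
  have -> : (g - X s) - (g - X r) = X r - X s.
    by rewrite opprB [LHS]addrC addrA subrK.
  have e : forall a b c : H, a + c - (b + c) = a - b.
    by move=> a b c; rewrite opprD addrACA subrr addr0.
  by rewrite e.
have hcc : 0 < binv + dhat by lra.
have Q1 := qf_pos X g ell m hcc.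
have Q2 := qf_Q2 hip KI ell (binv + dhat) m.
have Q3 := qf_Q3 hip KI ell m hcc.
have [n [r [hb [r0 hr]]]] := bis_term hlo hlohi Q1 Q2 Q3 hrho0.
exists n, r, (X r), (probA_y B D G z w r (X r)).
have hb' : bstate_after (probA_q A B C D G ell binv dhat m z w)
   theta_lo theta_hi rho0 n = BDone r := hb.
rewrite /probA_output hb'; split => //; split => //; split; first exact: hX.
by split.
Qed.
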